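(* Let $R$ be a discrete valuation ring with uniformizer $\pi$ and let $\Gamma$ be an abstract group. Assume that every $V\in\mathrm{Rep}_R(\Gamma)$ with $\pi V=0$ admits a weak lift. Then every $E\in\mathrm{Rep}_R(\Gamma)$ admits a weak lift; that is, $\Gamma$ is Tannakian over $R$.
   Context: $\mathrm{Rep}_R(\Gamma)$ is the category of left $R\Gamma$-modules which are finitely generated as $R$-modules; $\mathrm{Rep}^\circ_R(\Gamma)$ is the full subcategory of those which are projective (equivalently free) $R$-modules. A weak lift of $V\in\mathrm{Rep}_R(\Gamma)$ is an object $\widetilde V\in\mathrm{Rep}^\circ_R(\Gamma)$ together with a surjective morphism $\widetilde V\to V$ of $R\Gamma$-modules. $\Gamma$ is called Tannakian over $R$ if every object of $\mathrm{Rep}_R(\Gamma)$ admits a weak lift. *)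

(* Defs.v *)
From HB Require Import structures.
From mathcomp Require Import all_boot all_order all_algebra.
From mathcomp Require Import monoid.
Set Implicit Arguments. Unset Strict Implicit. Unset Printing Implicit Defensive.
Import GRing.Theory.
Local Open Scope ring_scope.

Definition is_DVR_uniformizer (R : idomainType) (pi : R) : Prop :=
  [/\ pi != 0, pi \isn't a GRing.unit &
      forall x : R, x != 0 ->
        exists (u : R) (n : nat), u \is a GRing.unit /\ x = u * pi ^+ n].

Definition Rlinear (R : idomainType) (M N : lmodType R) (f : M -> N) : Prop :=
  forall (a : R) (x y : M), f (a *: x + y) = a *: f x + f y.

Definition is_RGamma_action (R : idomainType) (G : groupType) (M : lmodType R)
    (rho : G -> M -> M) : Prop :=
  [/\ forall g, Rlinear (rho g),
      forall x, rho monoid.one x = x &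
      forall g h x, rho (monoid.mul g h) x = rho g (rho h x)].

Definition fin_gen (R : idomainType) (M : lmodType R) : Prop :=
  exists (n : nat) (v : 'I_n -> M),
    forall m : M, exists c : 'I_n -> R, m = \sum_(i < n) c i *: v i.

(* M is a free R-module of finite rank (for finitely generated modules over
   a DVR this is equivalent to projective). *)
Definition free_fin (R : idomainType) (M : lmodType R) : Prop :=
  exists (n : nat) (f : 'rV[R]_n -> M), Rlinear f /\ bijective f.

Definition in_Rep (R : idomainType) (G : groupType) (M : lmodType R)
    (rho : G -> M -> M) : Prop :=
  is_RGamma_action rho /\ fin_gen M.

Definition in_Rep0 (R : idomainType) (G : groupType) (M : lmodType R)
    (rho : G -> M -> M) : Prop :=
  in_Rep rho /\ free_fin M.

Definition is_weak_lift (R : idomainType) (G : groupType)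
    (V : lmodType R) (rhoV : G -> V -> V)
    (W : lmodType R) (rhoW : G -> W -> W) (f : W -> V) : Prop :=
  [/\ in_Rep0 rhoW, Rlinear f,
      (forall g x, f (rhoW g x) = rhoV g (f x)) & forall y : V, exists x : W, f x = y].

Definition has_weak_lift (R : idomainType) (G : groupType)
    (V : lmodType R) (rhoV : G -> V -> V) : Prop :=
  exists (W : lmodType R) (rhoW : G -> W -> W) (f : W -> V),
    is_weak_lift rhoV rhoW f.

Definition Tannakian (R : idomainType) (G : groupType) : Prop :=
  forall (V : lmodType R) (rho : G -> V -> V), in_Rep rho -> has_weak_lift rho.

(* Main.v *)
Require Import Defs.
From HB Require Import structures.
From mathcomp Require Import all_boot all_order all_algebra.
From mathcomp Require Import monoid.
From mathcomp Require Import ring.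
From Stdlib Require Import ClassicalEpsilon FunctionalExtensionality PropExtensionality Classical.
Set Implicit Arguments. Unset Strict Implicit. Unset Printing Implicit Defensive.
Import GRing.Theory.
Local Open Scope ring_scope.


Section Quot.
Variables (R : idomainType) (E : lmodType R) (pi : R).

Definition qrel (x y : E) : Prop := exists z : E, x - y = pi *: z.

Lemma qrel_refl x : qrel x x.
Proof. by exists 0; rewrite subrr scaler0. Qed.
Lemma qrel_sym x y : qrel x y -> qrel y x.
Proof. by case=> z h; exists (- z); rewrite scalerN -h opprB. Qed.
Lemma qrel_trans x y z : qrel x y -> qrel y z -> qrel x z.
Proof.
case=> a ha [b hb]; exists (a + b); rewrite scalerDr -ha -hb.
by rewrite addrA subrK.
Qed.
Lemma qrelD a b c d : qrel a b -> qrel c d -> qrel (a + c) (b + d).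
Proof.
case=> x hx [y hy]; exists (x + y); rewrite scalerDr -hx -hy.
by rewrite opprD addrACA.
Qed.
Lemma qrelN a b : qrel a b -> qrel (- a) (- b).
Proof. by case=> x hx; exists (- x); rewrite scalerN -hx opprB addrC opprK. Qed.
Lemma qrelZ r a b : qrel a b -> qrel (r *: a) (r *: b).
Proof. by case=> x hx; exists (r *: x); rewrite scalerA mulrC -scalerA -hx scalerBr. Qed.

Definition canon (x : E) : E := epsilon (inhabits (0 : E)) (fun y => qrel y x).

Lemma canon_rel x : qrel (canon x) x.
Proof. by apply: (epsilon_spec (inhabits (0:E)) (fun y => qrel y x)); exists x; apply: qrel_refl. Qed.

Lemma canon_eq x y : qrel x y -> canon x = canon y.
Proof.
move=> h; rewrite /canon.
have -> : (fun z => qrel z x) = (fun z => qrel z y); last by [].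
apply: functional_extensionality => z; apply: propositional_extensionality; split.
- by move=> hz; apply: qrel_trans hz h.
- by move=> hz; apply: qrel_trans hz (qrel_sym h).
Qed.

Lemma canon_idem x : canon (canon x) == canon x.
Proof. by apply/eqP/canon_eq/canon_rel. Qed.

Definition QT := {x : E | canon x == x}.
HB.instance Definition _ := Choice.on QT.

Definition mk (x : E) : QT := exist _ (canon x) (canon_idem x).

Lemma mk_val (a : QT) : mk (val a) = a.
Proof. by apply: val_inj => /=; case: a => x /= /eqP. Qed.

Lemma mk_eq x y : qrel x y -> mk x = mk y.
Proof. by move=> h; apply: val_inj => /=; apply: canon_eq. Qed.

Lemma mk_eqE x y : mk x = mk y -> qrel x y.
Proof.
move=> h; have : canon x = canon y by move: (congr1 val h).
move=> e; apply: qrel_trans (qrel_sym (canon_rel x)) _.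
by rewrite e; apply: canon_rel.
Qed.

Definition qadd (a b : QT) := mk (val a + val b).
Definition qopp (a : QT) := mk (- val a).
Definition qzero := mk 0.
Definition qscale (r : R) (a : QT) := mk (r *: val a).

Lemma mkD x y : qadd (mk x) (mk y) = mk (x + y).
Proof. by apply: mk_eq; apply: qrelD; apply: canon_rel. Qed.
Lemma mkN x : qopp (mk x) = mk (- x).
Proof. by apply: mk_eq; apply: qrelN; apply: canon_rel. Qed.
Lemma mkZ r x : qscale r (mk x) = mk (r *: x).
Proof. by apply: mk_eq; apply: qrelZ; apply: canon_rel. Qed.

Lemma qaddA : associative qadd.
Proof. by move=> a b c; rewrite -[a]mk_val -[b]mk_val -[c]mk_val !mkD addrA. Qed.
Lemma qaddC : commutative qadd.
Proof. by move=> a b; rewrite -[a]mk_val -[b]mk_val !mkD addrC. Qed.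
Lemma qadd0 : left_id qzero qadd.
Proof. by move=> a; rewrite -[a]mk_val /qzero !mkD add0r. Qed.
Lemma qaddN : left_inverse qzero qopp qadd.
Proof. by move=> a; rewrite -[a]mk_val mkN mkD addNr. Qed.

HB.instance Definition _ := GRing.isZmodule.Build QT qaddA qaddC qadd0 qaddN.

Lemma qscaleA a b v : qscale a (qscale b v) = qscale (a * b) v.
Proof. by rewrite -[v]mk_val !mkZ scalerA. Qed.
Lemma qscale1 : left_id 1 qscale.
Proof. by move=> v; rewrite -[v]mk_val !mkZ scale1r. Qed.
Lemma qscaleDr' r a b : qscale r (qadd a b) = qadd (qscale r a) (qscale r b).
Proof. rewrite -[a]mk_val -[b]mk_val mkD !mkZ (mkD (r *: val a)) scalerDr. by []. Qed.
Lemma qscaleDr : right_distributive qscale +%R.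
Proof. exact: qscaleDr'. Qed.
Lemma qscaleDl' v a b : qscale (a + b) v = qadd (qscale a v) (qscale b v).
Proof. by rewrite -[v]mk_val !mkZ mkD scalerDl. Qed.
Lemma qscaleDl v : {morph qscale^~ v: a b / a + b}.
Proof. move=> a b; exact: qscaleDl'. Qed.

HB.instance Definition _ := GRing.Zmodule_isLmodule.Build R QT qscaleA qscale1 qscaleDr qscaleDl.

Lemma mk_lin : Rlinear (mk : E -> QT).
Proof. move=> a x y; change (mk (a *: x + y) = qadd (qscale a (mk x)) (mk y)). by rewrite mkZ mkD. Qed.

Lemma mk0 x : mk x = 0 <-> exists z, x = pi *: z.
Proof.
split.
- move=> h; have : mk x = mk 0 by [].
  by case/mk_eqE => z; rewrite subr0 => ->; exists z.
- by case=> z ->; apply: (mk_eq (x:= pi *: z) (y := 0)); exists z; rewrite subr0.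
Qed.

Lemma QT_pi (v : QT) : pi *: v = 0.
Proof.
rewrite -[v]mk_val; change (qscale pi (mk (val v)) = mk 0).
by rewrite mkZ; apply: mk_eq; exists (val v); rewrite subr0.
Qed.

End Quot.


Section Lin.
Variables (R : idomainType) (M N : lmodType R) (f : M -> N) (hf : Rlinear f).
Lemma RlinD x y : f (x + y) = f x + f y.
Proof. by have := hf 1 x y; rewrite !scale1r. Qed.
Lemma Rlin0 : f 0 = 0.
Proof. by apply: (addIr (f 0)); rewrite -RlinD !add0r. Qed.
Lemma RlinZ a x : f (a *: x) = a *: f x.
Proof. by have := hf a x 0; rewrite !addr0 Rlin0 addr0. Qed.
Lemma RlinN x : f (- x) = - f x.
Proof. by rewrite -scaleN1r RlinZ scaleN1r. Qed.
Lemma RlinB x y : f (x - y) = f x - f y.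
Proof. by rewrite RlinD RlinN. Qed.
Lemma Rlin_sum n (c : 'I_n -> R) (v : 'I_n -> M) :
  f (\sum_(i < n) c i *: v i) = \sum_(i < n) c i *: f (v i).
Proof.
elim: n c v => [|n IH] c v; first by rewrite !big_ord0 Rlin0.
by rewrite !big_ord_recr /= RlinD RlinZ IH.
Qed.
End Lin.

Section Fib.
Variables (R : idomainType) (E : lmodType R) (pi : R) (W : lmodType R)
  (f : W -> QT E pi) (hf : Rlinear f).

Definition fibp (p : W * E) : bool := f p.1 == mk pi p.2.
Definition PT (_ : Rlinear f) := {p : W * E | fibp p}.
HB.instance Definition _ := Choice.on (PT hf).

Lemma fibpD p q : fibp p -> fibp q -> fibp (p + q).
Proof.
rewrite /fibp => /eqP hp /eqP hq; apply/eqP => /=.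
by rewrite (RlinD hf) hp hq -(RlinD (@mk_lin _ _ pi)).
Qed.
Lemma fibpZ a p : fibp p -> fibp (a *: p).
Proof.
rewrite /fibp => /eqP hp; apply/eqP => /=.
by rewrite (RlinZ hf) hp -(RlinZ (@mk_lin _ _ pi)).
Qed.
Lemma fibp0 : fibp 0.
Proof. by rewrite /fibp /= (Rlin0 hf) -(Rlin0 (@mk_lin _ _ pi)). Qed.
Lemma fibpN p : fibp p -> fibp (- p).
Proof. by move=> h; rewrite -scaleN1r; apply: fibpZ. Qed.

Definition padd (a b : PT hf) : PT hf := exist _ (val a + val b) (fibpD (valP a) (valP b)).
Definition popp (a : PT hf) : PT hf := exist _ (- val a) (fibpN (valP a)).
Definition pzero : PT hf := exist _ 0 fibp0.
Definition pscale r (a : PT hf) : PT hf := exist _ (r *: val a) (fibpZ r (valP a)).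

Lemma paddA : associative padd.
Proof. by move=> a b c; apply: val_inj; rewrite /= addrA. Qed.
Lemma paddC : commutative padd.
Proof. by move=> a b; apply: val_inj; rewrite /= addrC. Qed.
Lemma padd0 : left_id pzero padd.
Proof. by move=> a; apply: val_inj; rewrite /= add0r. Qed.
Lemma paddN : left_inverse pzero popp padd.
Proof. by move=> a; apply: val_inj; rewrite /= addNr. Qed.
HB.instance Definition _ := GRing.isZmodule.Build (PT hf) paddA paddC padd0 paddN.

Lemma pscaleA a b v : pscale a (pscale b v) = pscale (a * b) v.
Proof. by apply: val_inj; rewrite /= scalerA. Qed.
Lemma pscale1 : left_id 1 pscale.
Proof. by move=> v; apply: val_inj; rewrite /= scale1r. Qed.
Lemma pscaleDr : right_distributive pscale +%R.
Proof. by move=> r a b; apply: val_inj; rewrite /= scalerDr. Qed.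
Lemma pscaleDl v : {morph pscale^~ v: a b / a + b}.
Proof. by move=> a b; apply: val_inj; rewrite /= scalerDl. Qed.
HB.instance Definition _ := GRing.Zmodule_isLmodule.Build R (PT hf) pscaleA pscale1 pscaleDr pscaleDl.

Lemma val_lin : Rlinear (fun p : PT hf => val p).
Proof. by []. Qed.
Lemma snd_lin : Rlinear (fun p : PT hf => (val p).2).
Proof. by []. Qed.
Lemma fst_lin : Rlinear (fun p : PT hf => (val p).1).
Proof. by []. Qed.

End Fib.


Section DVR.
Variables (R : idomainType) (pi : R) (hR : is_DVR_uniformizer pi).

Lemma pi_neq0 : pi != 0. Proof. by case: hR. Qed.
Lemma pik_neq0 k : pi ^+ k != 0. Proof. by rewrite expf_neq0 // pi_neq0. Qed.

Lemma dvd_total (a b : R) : (exists d, b = d * a) \/ (exists d, a = d * b).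
Proof.
have [->|a0] := eqVneq a 0; first by right; exists 0; rewrite mul0r.
have [->|b0] := eqVneq b 0; first by left; exists 0; rewrite mul0r.
case: hR => _ _ h.
case: (h a a0) => u [m [hu ->]]; case: (h b b0) => w [k [hw ->]].
have [le|lt] := leqP m k.
- left; exists (w / u * pi ^+ (k - m)).
  rewrite -{1}(subnK le) exprD.
  transitivity (w * pi ^+ (k - m) * pi ^+ m * (u^-1 * u)); last first.
    by ring.
  by rewrite mulVr // mulr1 mulrA.
- right; exists (u / w * pi ^+ (m - k)).
  have le : (k <= m)%N by apply: ltnW.
  rewrite -{1}(subnK le) exprD.
  transitivity (u * pi ^+ (m - k) * pi ^+ k * (w^-1 * w)); last first.
    by ring.
  by rewrite mulVr // mulr1 mulrA.
Qed.

Lemma dvd_min n (c : 'I_n -> R) i0 : c i0 != 0 ->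
  exists j, c j != 0 /\ forall i, exists d, c i = d * c j.
Proof.
move=> h0.
suff : forall s : seq 'I_n, exists j, c j != 0 /\ forall i, i \in s -> exists d, c i = d * c j.
  by case/(_ (enum 'I_n)) => j [hj hs]; exists j; split => // i; apply: hs; rewrite mem_enum.
elim=> [|i s [j [hj hs]]]; first by exists i0.
case: (dvd_total (c j) (c i)) => [hd|[d hd]].
- exists j; split => // i'; rewrite inE => /orP [/eqP -> //|]; exact: hs.
- have ci0 : c i != 0 by apply: contraNneq hj => e; rewrite hd e mulr0.
  exists i; split => // i'; rewrite inE => /orP [/eqP ->|/hs [d' ->]].
    by exists 1; rewrite mul1r.
  by exists (d' * d); rewrite hd mulrA.
Qed.

End DVR.


Section Span.
Variables (R : idomainType) (E : lmodType R).
Definition spanned n (v : 'I_n -> E) (x : E) := exists c : 'I_n -> R, x = \sum_(i < n) c i *: v i.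

Lemma spanD n (v : 'I_n -> E) x y : spanned v x -> spanned v y -> spanned v (x + y).
Proof.
case=> c -> [d ->]; exists (fun i => c i + d i).
by rewrite -big_split /=; apply: eq_bigr => i _; rewrite scalerDl.
Qed.
Lemma spanZ n (v : 'I_n -> E) a x : spanned v x -> spanned v (a *: x).
Proof.
case=> c ->; exists (fun i => a * c i).
by rewrite scaler_sumr; apply: eq_bigr => i _; rewrite scalerA.
Qed.
Lemma spanN n (v : 'I_n -> E) x : spanned v x -> spanned v (- x).
Proof. by move=> h; rewrite -scaleN1r; apply: spanZ. Qed.

Definition tbE (pi : R) (N : nat) := forall (x : E) k, pi ^+ k *: x = 0 -> pi ^+ N *: x = 0.

Lemma tb_exists (pi : R) : is_DVR_uniformizer pi -> forall n (v : 'I_n -> E),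
  exists N, forall x, spanned v x -> forall k, pi ^+ k *: x = 0 -> pi ^+ N *: x = 0.
Proof.
move=> hR; elim=> [|n IH] v.
  by exists 0%N => x [c ->] k _; rewrite big_ord0 scaler0.
pose v' := fun i : 'I_n => v (widen_ord (leqnSn n) i).
case: (IH v') => N' hN'.
have dec : forall x, spanned v x -> exists y d, spanned v' y /\ x = y + d *: v ord_max.
  move=> x [c ->]; rewrite big_ord_recr /=.
  by exists (\sum_(i < n) c (widen_ord (leqnSn n) i) *: v' i), (c ord_max); split => //; exists (fun i => c (widen_ord (leqnSn n) i)).
case: (classic (exists c : R, c != 0 /\ spanned v' (c *: v ord_max))) => [[c [c0 hc]]|hno].
- case: hR => _ _ h; case: (h c c0) => u [j [hu ec]].
  have hj : spanned v' (pi ^+ j *: v ord_max).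
    have -> : pi ^+ j *: v ord_max = u^-1 *: (c *: v ord_max).
      by rewrite scalerA ec mulrA mulVr // mul1r.
    exact: spanZ.
  exists (N' + j)%N => x hx k hk.
  case: (dec x hx) => y [d [hy ex]]; rewrite ex in hk *.
  rewrite exprD -scalerA; apply: (hN' _ _ k).
    rewrite scalerDr; apply: spanD; first exact: spanZ.
    by rewrite scalerA mulrC -scalerA; apply: spanZ.
  by rewrite scalerA mulrC -scalerA hk scaler0.
- exists N' => x hx k hk.
  case: (dec x hx) => y [d [hy ex]].
  have d0 : d = 0.
    apply/eqP; apply: contraT => dn0.
    exfalso; apply: hno; exists (pi ^+ k * d); split; first by rewrite mulf_neq0 ?pik_neq0.
    have -> : (pi ^+ k * d) *: v ord_max = - (pi ^+ k *: y).
      by apply/eqP; rewrite -subr_eq0 opprK -scalerA addrC -scalerDr -ex hk eqxx.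
    exact: (spanN (spanZ (pi ^+ k) hy)).
  by apply: (hN' _ _ k); rewrite ex d0 scale0r addr0 in hk *.
Qed.
End Span.


Section Free.
Variables (R : idomainType) (E : lmodType R).

Definition tfE := forall (a : R) (x : E), a != 0 -> a *: x = 0 -> x = 0.

Lemma indep_free n (v : 'I_n -> E) : (forall x, spanned v x) ->
  (forall c, \sum_(i < n) c i *: v i = 0 -> forall i, c i = 0) -> free_fin E.
Proof.
move=> hs hi.
pose f := fun r : 'rV[R]_n => \sum_(i < n) r 0 i *: v i.
have flin : Rlinear f.
  move=> a r s; rewrite /f scaler_sumr -big_split /=; apply: eq_bigr => i _.
  by rewrite !mxE scalerDl scalerA.
exists n, f; split => //.
have finj : injective f.
  move=> r s e; apply/matrixP => i j; rewrite (ord1 i); apply/eqP; rewrite -subr_eq0; apply/eqP.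
  have := hi (fun j => r 0 j - s 0 j); apply.
  rewrite -[RHS](subrr (f s)) -{1}e /f -sumrB; apply: eq_bigr => k _.
  by rewrite scalerBl.
have hs' : forall x, exists r, f r = x.
  move=> x; case: (hs x) => c ->; exists (\row_i c i).
  by rewrite /f; apply: eq_bigr => i _; rewrite mxE.
pose g := fun x => proj1_sig (constructive_indefinite_description _ (hs' x)).
have fg : cancel g f by move=> x; rewrite /g; case: constructive_indefinite_description.
by exists g => // r; apply: finj; rewrite fg.
Qed.

Lemma tf_free (pi : R) : is_DVR_uniformizer pi -> tfE -> forall n (v : 'I_n -> E),
  (forall x, spanned v x) -> free_fin E.
Proof.
move=> hR htf; elim=> [|n IH] v hs.
  by apply: (indep_free hs) => c _ [].
case: (classic (forall c, \sum_(i < n.+1) c i *: v i = 0 -> forall i, c i = 0)) => hind.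
  exact: indep_free hs hind.
have [c [hc [i0 ci0]]] : exists c, \sum_(i < n.+1) c i *: v i = 0 /\ exists i0, c i0 != 0.
  apply: NNPP => hn; apply: hind => c hc i; apply: NNPP => hci; apply: hn.
  by exists c; split => //; exists i; apply/eqP.
case: (dvd_min hR ci0) => j [cj0 hdv].
pose d := fun i => proj1_sig (constructive_indefinite_description _ (hdv i)).
have hd : forall i, c i = d i * c j.
  by move=> i; rewrite /d; case: constructive_indefinite_description.
have dj : d j = 1.
  by apply: (mulIf cj0); rewrite -hd mul1r.
have hrel : \sum_(i < n.+1) d i *: v i = 0.
  apply: (htf (c j)) => //; rewrite scaler_sumr -[RHS]hc; apply: eq_bigr => i _.
  by rewrite scalerA mulrC -hd.
apply: (IH (fun i => v (lift j i))) => x.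
case: (hs x) => e ->.
exists (fun i => e (lift j i) - e j * d (lift j i)).
have -> : \sum_(i < n.+1) e i *: v i = \sum_(i < n.+1) (e i - e j * d i) *: v i.
  transitivity (\sum_(i < n.+1) e i *: v i - e j *: \sum_(i < n.+1) d i *: v i).
    by rewrite hrel scaler0 subr0.
  rewrite scaler_sumr -sumrB; apply: eq_bigr => i _.
  by rewrite scalerBl scalerA.
rewrite (bigD1_ord j) //= dj mulr1 subrr scale0r add0r.
by [].
Qed.
End Free.


Lemma fin_gen_two (R : idomainType) (M : lmodType R) m n (u : 'I_m -> M) (t : 'I_n -> M) :
  (forall p, exists (a : 'I_m -> R) (c : 'I_n -> R),
     p = \sum_(j < m) a j *: u j + \sum_(i < n) c i *: t i) -> fin_gen M.
Proof.
move=> h.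
exists (m + n)%N, (fun k => match split k with inl j => u j | inr i => t i end) => p.
case: (h p) => a [c ->].
exists (fun k => match split k with inl j => a j | inr i => c i end).
rewrite big_split_ord /=; congr (_ + _); apply: eq_bigr => i _.
- by rewrite (unsplitK (inl i)).
- by rewrite (unsplitK (inr i)).
Qed.

Lemma spanned_fin (R : idomainType) (M : lmodType R) :
  fin_gen M -> exists n (v : 'I_n -> M), forall x, spanned v x.
Proof. by case=> n [v h]; exists n, v. Qed.

Section Act.
Variables (R : idomainType) (pi : R) (hR : is_DVR_uniformizer pi)
  (E : lmodType R) (G : groupType) (rho : G -> E -> E) (hE : in_Rep rho).

Lemma rho_lin g : Rlinear (rho g). Proof. by case: hE => [[]]. Qed.

Definition rhoQ g (v : QT E pi) : QT E pi := mk pi (rho g (val v)).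

Lemma qrel_rho g x y : qrel pi x y -> qrel pi (rho g x) (rho g y).
Proof.
case=> z hz; exists (rho g z).
by rewrite -(RlinB (rho_lin g)) hz (RlinZ (rho_lin g)).
Qed.

Lemma rhoQ_mk g x : rhoQ g (mk pi x) = mk pi (rho g x).
Proof. by apply: mk_eq; apply: qrel_rho; apply: canon_rel. Qed.

Lemma QRep : in_Rep rhoQ.
Proof.
case: hE => [[hl h1 hm] [n [v hv]]]; split; first split.
- move=> g a x y; rewrite -[x]mk_val -[y]mk_val -(mk_lin pi) !rhoQ_mk.
  by rewrite (hl g) (mk_lin pi).
- by move=> x; rewrite -[x]mk_val rhoQ_mk h1.
- by move=> g h x; rewrite -[x]mk_val !rhoQ_mk hm.
- exists n, (fun i => mk pi (v i)) => x.
  case: (hv (val x)) => c hc; exists c.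
  by rewrite -[x]mk_val hc (Rlin_sum (mk_lin pi)).
Qed.

Section Fiber.
Variables (W : lmodType R) (rhoW : G -> W -> W) (f : W -> QT E pi)
  (hf : is_weak_lift rhoQ rhoW f).

Lemma flin : Rlinear f. Proof. by case: hf. Qed.

Lemma rhoP_subproof g (p : PT flin) : fibp f (rhoW g (val p).1, rho g (val p).2).
Proof.
case: hf => _ _ heq _; case: p => [[w e]] /= /eqP hp; apply/eqP => /=.
by rewrite heq hp rhoQ_mk.
Qed.

Definition rhoP g (p : PT flin) : PT flin := exist (fun q => fibp f q) _ (rhoP_subproof g p).

Lemma W_tf : forall (w : W) k, pi ^+ k *: w = 0 -> w = 0.
Proof.
case: hf => [[_ [m [phi [hphi [psi c1 c2]]]]] _ _ _] w k hk.
have h0 : phi (pi ^+ k *: psi w) = phi 0 by rewrite (RlinZ hphi) c2 hk (Rlin0 hphi).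
have := congr1 psi h0; rewrite !c1 => hr.
have hw : psi w = 0.
  apply/matrixP => i j; have := congr1 (fun r : 'rV_m => r i j) hr.
  rewrite /= !mxE => /eqP; rewrite mulf_eq0 (negPf (pik_neq0 hR k)) /= => /eqP ->.
  by [].
by rewrite -(c2 w) hw (Rlin0 hphi).
Qed.


Lemma PRep : in_Rep rhoP.
Proof.
case: hE => [[hl h1 hm] [n [v hv]]].
case: hf => [[[[hWl hW1 hWm] [m [b hb]]] _] hfl heq hsur].
split; first split.
- move=> g a x y; apply: val_inj => /=.
  by congr (_, _); [apply: hWl | apply: hl].
- by move=> x; apply: val_inj; case: x => [[w e]] /= _; rewrite hW1 h1.
- by move=> g h x; apply: val_inj; case: x => [[w e]] /= _; rewrite hWm hm.
pose et := fun j => val (f (b j)).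
have hu : forall j, fibp f (b j, et j) by move=> j; rewrite /fibp /= mk_val.
have ht : forall i, fibp f (0, pi *: v i).
  move=> i; rewrite /fibp /= (Rlin0 hfl); apply/eqP; apply/esym/mk0.
  by exists (v i).
apply: (fin_gen_two (u := fun j => (exist (fun q => fibp f q) _ (hu j) : PT flin))
                    (t := fun i => (exist (fun q => fibp f q) _ (ht i) : PT flin))).
case=> [[w e]] /= hp.
case: (hb w) => a ha.
have hx : mk pi (e - \sum_(j < m) a j *: et j) = 0.
  rewrite (RlinB (mk_lin pi)) (Rlin_sum (mk_lin pi)).
  have -> : \sum_(j < m) a j *: mk pi (et j) = f w.
    by rewrite ha (Rlin_sum hfl); apply: eq_bigr => j _; rewrite /et mk_val.
  by move/eqP: hp => ->; rewrite subrr.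
case/mk0: hx => z hz.
case: (hv z) => c hc.
exists a, c; apply: val_inj.
rewrite (RlinD (@val_lin _ _ _ _ _ flin)) !(Rlin_sum (@val_lin _ _ _ _ _ flin)) /=.
have fstl : Rlinear (fun q : W * E => q.1) by [].
have sndl : Rlinear (fun q : W * E => q.2) by [].
apply/eqP; rewrite xpair_eqE; apply/andP; split; apply/eqP.
  have := Rlin_sum fstl a (fun j => (b j, et j)); rewrite /= => ->.
  have := Rlin_sum fstl c (fun j => (0 : W, pi *: v j)); rewrite /= => ->.
  rewrite -ha big1 ?addr0 // => i _; exact: scaler0.
- have := Rlin_sum sndl a (fun j => (b j, et j)); rewrite /= => ->.
  have := Rlin_sum sndl c (fun j => (0 : W, pi *: v j)); rewrite /= => ->.
  have -> : \sum_(i < n) c i *: (pi *: v i) = pi *: z.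
    by rewrite hc scaler_sumr; apply: eq_bigr => i _; rewrite !scalerA mulrC.
  by rewrite -hz addrC subrK.
Qed.

Lemma P_tb N : tbE E pi N.+1 -> tbE (PT flin) pi N.
Proof.
move=> hN [[w e] hp] k hk.
have hk' := congr1 val hk; move: hk' => /= /eqP; rewrite xpair_eqE => /andP [/eqP h1 /eqP h2].
have w0 : w = 0 by apply: (W_tf h1).
subst w; clear hk.
have := hp; rewrite /fibp /= (Rlin0 flin) => /eqP /esym /mk0 [z ez].
have hz : pi ^+ N.+1 *: z = 0.
  apply: (hN _ k.+1); by rewrite exprSr -scalerA -ez.
apply: val_inj => /=; apply/eqP; rewrite xpair_eqE scaler0 eqxx /= ez scalerA -exprSr hz.
by [].
Qed.

Lemma compose : has_weak_lift rhoP -> has_weak_lift rho.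
Proof.
case=> W' [rhoW' [h [hR0 hl heq hs]]].
case: hf => _ hfl hfe hfs.
exists W', rhoW', (fun x => (val (h x)).2); split => //.
- by move=> a x y; rewrite hl.
- by move=> g x; rewrite heq.
- move=> e; case: (hfs (mk pi e)) => w hw.
  have hp : fibp f (w, e) by rewrite /fibp /= hw.
  case: (hs (exist (fun q => fibp f q) _ hp)) => x hx.
  by exists x; rewrite hx.
Qed.

End Fiber.

End Act.


Lemma main_ind (R : idomainType) (pi : R) (G : groupType) : is_DVR_uniformizer pi ->
  (forall (V : lmodType R) (rho : G -> V -> V),
      in_Rep rho -> (forall v : V, pi *: v = 0) -> has_weak_lift rho) ->
  forall N (E : lmodType R) (rho : G -> E -> E), in_Rep rho -> tbE E pi N -> has_weak_lift rho.
Proof.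
move=> hR hyp; elim=> [|N IH] E rho hE hN.
- have htf : tfE E.
    move=> a x a0 hax.
    case: hR => _ _ h; case: (h a a0) => u [k [hu ea]].
    have : pi ^+ k *: x = 0.
      by rewrite -[pi ^+ k]mul1r -(mulVr hu) -mulrA -ea -scalerA hax scaler0.
    by move/hN; rewrite expr0 scale1r.
  have hfree : free_fin E.
    by case: (spanned_fin hE.2) => n [v hv]; apply: (tf_free hR htf hv).
  exists E, rho, id; split => //.
  by move=> y; exists y.
- case: (hyp _ _ (QRep pi hE) (@QT_pi _ _ pi)) => W [rhoW [f hf]].
  apply: (@compose _ _ _ _ _ hE _ _ _ hf).
  apply: (IH _ (@rhoP _ _ _ _ _ hE _ _ _ hf)).
    exact: (PRep hE hf).
  exact: (P_tb hR hN).
Qed.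

Unset Implicit Arguments.
Theorem proposition4p4 (R : idomainType) (pi : R) (G : groupType) :
  is_DVR_uniformizer pi ->
  (forall (V : lmodType R) (rho : G -> V -> V),
      in_Rep rho -> (forall v : V, pi *: v = 0) -> has_weak_lift rho) ->
  Tannakian R G.
Proof.
move=> hR hyp E rho hE.
case: (spanned_fin hE.2) => n [v hv].
case: (tb_exists hR v) => N hN.
apply: (main_ind hR hyp (N := N) hE) => x k hk.
exact: (hN x (hv x) k hk).
Qed.
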